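(* Let $c\in[0,1)$ and $b=\tfrac12-c$. For any $\varepsilon>0$ and any $C>1$ there exist $0<\delta'<C\delta'<\delta<\tfrac12$ such that $\dim_H\mathcal B(\delta,\delta')<\varepsilon$.
   Context: $\mathbb T=\mathbb R/\mathbb Z$, $Tx=2x\bmod1$, $d$ the usual distance, $B(b,r)$ the open ball. Given $\tfrac12>\delta>\delta'>0$, a positive integer $n$ is a $(\delta,\delta')$-good time of $x\in\mathbb T$ if $d(T^nx,b)<\delta'$ and $b\notin T^j(J)$ for each $0\le j<n$, where $J$ is the connected component of $T^{-n}(B(b,\delta))$ containing $x$. $\mathcal B(\delta,\delta')=\{x\in\mathbb T: b\in\omega(x)$ but $x$ has no $(\delta,\delta')$-good time$\}$, where $\omega(x)$ is the $\omega$-limit set of $x$ under $T$. *)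

(* Defs.v *)
From HB Require Import structures.
From mathcomp Require Import all_boot all_order all_algebra.
From mathcomp Require Import all_classical all_reals all_analysis.
Set Implicit Arguments. Unset Strict Implicit. Unset Printing Implicit Defensive.
Import Order.TTheory GRing.Theory Num.Theory.
Import numFieldNormedType.Exports.
Local Open Scope classical_set_scope.
Local Open Scope ring_scope.

Section Defs.
Variable R : realType.

(* Points of T = R/Z are represented by reals (lifts); T x := 2x mod 1. *)
Definition fracR (x : R) : R := x - (Num.floor x)%:~R.

Definition dT (x y : R) : R := Num.min (fracR (x - y)) (1 - fracR (x - y)).

Definition Tn (n : nat) (x : R) : R := fracR (2 ^+ n * x).

Definition preball (n : nat) (b delta : R) : set R :=
  [set y | dT (Tn n y) b < delta].

(* J: connected component of T^{-n}(B(b,delta)) containing x (computed on the lift) *)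
Definition compJ (n : nat) (b delta x : R) : set R :=
  connected_component (preball n b delta) x.

Definition good_time (b delta delta' x : R) (n : nat) : Prop :=
  (0 < n)%N /\ dT (Tn n x) b < delta' /\
  forall j : nat, (j < n)%N ->
    ~ (exists y, compJ n b delta x y /\ dT (Tn j y) b = 0).

Definition in_omega (b x : R) : Prop :=
  forall e : R, 0 < e -> forall N : nat, exists n : nat, (N <= n)%N /\ dT (Tn n x) b < e.

(* the set B(delta, delta') as a subset of the fundamental domain [0,1) *)
Definition badset (b delta delta' : R) : set R :=
  [set x | 0 <= x < 1 /\ in_omega b x /\ ~ (exists n, good_time b delta delta' x n)].

Definition diamR (A : set R) : R :=
  sup [set d | exists x y, A x /\ A y /\ d = `|x - y|].

Definition hterm (s : R) (U : set R) : \bar R :=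
  (if pselect (U = set0) then 0 else powR (diamR U) s)%:E.

Definition eta_cover (eta : R) (A : set R) (U : nat -> set R) : Prop :=
  A `<=` \bigcup_i U i /\ forall i x y, U i x -> U i y -> `|x - y| <= eta.

Definition hcontent (s eta : R) (A : set R) : \bar R :=
  ereal_inf [set (\sum_(0 <= i <oo) hterm s (U i))%E | U in eta_cover eta A].

Definition hmeasure (s : R) (A : set R) : \bar R :=
  ereal_sup [set hcontent s eta A | eta in [set eta : R | 0 < eta]].

Definition hdim (A : set R) : \bar R :=
  ereal_inf [set s%:E | s in [set s : R | 0 <= s /\ hmeasure s A = 0%E]].

End Defs.

(* Main.v *)
Require Import Defs.
From HB Require Import structures.
From mathcomp Require Import all_boot all_order all_algebra.
From mathcomp Require Import all_classical all_reals all_analysis.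
From mathcomp Require Import lra ring zify.
Set Implicit Arguments. Unset Strict Implicit. Unset Printing Implicit Defensive.
Import Order.TTheory GRing.Theory Num.Theory.
Import numFieldNormedType.Exports.
Local Open Scope classical_set_scope.
Local Open Scope ring_scope.


Section Basic.
Variable R : realType.
Implicit Types t u v : R.

Definition dZ (t : R) : R := Num.min (fracR t) (1 - fracR t).

Lemma dT_dZ u v : dT u v = dZ (u - v). Proof. by []. Qed.

Lemma frac_ge0 t : 0 <= fracR t.
Proof. by rewrite /fracR subr_ge0 floor_le. Qed.

Lemma frac_lt1 t : fracR t < 1.
Proof. by have := floorD1_gt t; rewrite /fracR intrD; lra. Qed.

Lemma frac_int t (k : int) : fracR (t + k%:~R) = fracR t.
Proof. by rewrite /fracR floorDrz ?intr_int // intrD intrKfloor; ring. Qed.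

Lemma dZ_int t (k : int) : dZ (t + k%:~R) = dZ t.
Proof. by rewrite /dZ frac_int. Qed.

Lemma dZ_ge0 t : 0 <= dZ t.
Proof. by rewrite /dZ le_min frac_ge0 subr_ge0 ltW ?frac_lt1. Qed.

Lemma frac_small u : 0 <= u < 1 -> fracR u = u.
Proof. by move=> hu; rewrite /fracR (@floor_def _ _ 0) ?subr0 //= add0r. Qed.

Lemma frac_smallN u : -1 <= u < 0 -> fracR u = u + 1.
Proof.
move=> hu; rewrite /fracR (@floor_def _ _ (-1)); last by rewrite addNr /=; lra.
by rewrite /= opprK.
Qed.

Lemma lt_dZ t r (k : int) : r <= 1 -> `|t - k%:~R| < r -> dZ t < r.
Proof.
move=> r1 h; have -> : t = (t - k%:~R) + k%:~R by ring.
rewrite dZ_int; set u := t - _ in h *.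
have [u0|u0] := leP 0 u.
- rewrite /dZ frac_small; last by rewrite u0 /=; move: h; rewrite ger0_norm //; lra.
  by rewrite gt_min; apply/orP; left; move: h; rewrite ger0_norm.
- rewrite /dZ frac_smallN; last by move: h; rewrite ltr0_norm //; lra.
  rewrite gt_min; apply/orP; right; move: h; rewrite ltr0_norm //; lra.
Qed.

Lemma dZ_lt t r : dZ t < r -> exists k : int, `|t - k%:~R| < r.
Proof.
rewrite /dZ gt_min => /orP[h|h].
- exists (Num.floor t); rewrite ger0_norm //; exact: frac_ge0.
- exists (Num.floor t + 1); rewrite intrD ler0_norm.
    by move: h; rewrite /fracR; lra.
  by have := frac_lt1 t; rewrite /fracR; lra.
Qed.

Lemma dZ0 t : dZ t = 0 -> exists k : int, t = k%:~R.
Proof.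
rewrite /dZ => h; exists (Num.floor t).
have := frac_lt1 t; have := frac_ge0 t.
move: h; rewrite minEle; case: ifP; rewrite /fracR => h1; lra.
Qed.

Lemma dZ_half (k : int) : dZ (k%:~R + 1/2) = 1/2.
Proof.
rewrite addrC dZ_int /dZ frac_small; last by lra.
rewrite minEle ifT //; lra.
Qed.

Lemma int_small (z : int) : `|z%:~R : R| < 1 -> z = 0.
Proof.
move=> h; apply/eqP; apply: contraLR h => hz; rewrite -leNgt.
by apply: norm_intr_ge1; rewrite ?intr_int ?intr_eq0.
Qed.

Lemma Tn_dZ n y b : dT (Tn n y) b = dZ (2 ^+ n * y - b).
Proof.
rewrite dT_dZ /Tn /fracR.
have -> : 2 ^+ n * y - (Num.floor (2 ^+ n * y))%:~R - b =
  (2 ^+ n * y - b) + (- Num.floor (2 ^+ n * y))%:~R by rewrite intrN; ring.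
by rewrite dZ_int.
Qed.

End Basic.

Section Comp.
Variable R : realType.

Lemma comp_bound (n : nat) (b d x : R) (k : int) :
  d < 1/2 -> `|2 ^+ n * x - b - k%:~R| < d ->
  forall y, compJ n b d x y -> `|2 ^+ n * y - b - k%:~R| < d.
Proof.
move=> d12 hx y Jy.
have e2 : 0 < (2:R) ^+ n by rewrite exprn_gt0.
have Px : preball n b d x by rewrite /preball /= Tn_dZ; apply: lt_dZ hx; lra.
have Jx : compJ n b d x x by exact: connected_component_refl.
have Jint : is_interval (compJ n b d x).
  by apply/connected_intervalP; exact: component_connected.
have Jsub : compJ n b d x `<=` preball n b d by exact: connected_component_sub.
have [k' hk'] : exists k' : int, `|2 ^+ n * y - b - k'%:~R| < d.
  by apply: dZ_lt; have := Jsub _ Jy; rewrite /preball /= Tn_dZ.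
have [kk|kk] := eqVneq k' k; first by rewrite -kk.
have dpos : 0 < d by apply: le_lt_trans hx.
have bad : forall z : R, compJ n b d x z -> forall j : int,
    2 ^+ n * z = b + j%:~R + 1/2 -> False.
  move=> z Jz j hz; have := Jsub _ Jz; rewrite /preball /= Tn_dZ hz.
  have -> : b + j%:~R + 1 / 2 - b = j%:~R + 1/2 by ring.
  rewrite dZ_half; lra.
have hz : forall w : R, 2 ^+ n * (w / 2 ^+ n) = w.
  by move=> w; rewrite mulrC divfK // gt_eqF.
move: hx hk'; rewrite !ltr_norml => hx hk'.
have [lt|lt] := ltP k' k.
- have : k' + 1 <= k by lia.
  rewrite -(ler_int R) intrD => lt'.
  exfalso; apply: (bad _ _ (k - 1) (hz _)).
  apply: (Jint y x Jy Jx); apply/andP; split.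
  + by rewrite -(ler_pM2l e2) hz intrD; lra.
  + by rewrite -(ler_pM2l e2) hz intrD; lra.
- have : k + 1 <= k' by lia.
  rewrite -(ler_int R) intrD => lt'.
  exfalso; apply: (bad _ _ k (hz _)).
  apply: (Jint x y Jx Jy); apply/andP; split.
  + by rewrite -(ler_pM2l e2) hz; lra.
  + by rewrite -(ler_pM2l e2) hz; lra.
Qed.

End Comp.

Section Chain.
Variable R : realType.
Implicit Types b d : R.

Definition Eset b d (m : nat) (e : R) :=
  `|e| < d /\ exists z : int, e = b - 2 ^+ m * b + z%:~R.

Inductive Zpath b d : nat -> R -> R -> Prop :=
| ZP0 v : Zpath b d 0 v v
| ZPS m n v y e : (0 < m)%N -> Eset b d m e -> Zpath b d n ((v + e) / 2 ^+ m) y ->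
    Zpath b d (m + n) v y.

Definition NoGood b d d' (x : R) := ~ exists n, good_time b d d' x n.

Lemma chain b d d' (d12 : d < 1/2) (d'd : d' < d)
  (stepP : forall m e v, (0 < m)%N -> Eset b d m e -> `|v| < d' ->
     `|(v + e) / 2 ^+ m| < d') x :
  NoGood b d d' x -> forall n (k : int),
  `|2 ^+ n * x - b - k%:~R| < d' ->
  exists i : int, Zpath b d n (2 ^+ n * x - b - k%:~R) (x - b - i%:~R).
Proof.
move=> ng n; elim: n {-2}n (leqnn n) => [|N IH] n.
  rewrite leqn0 => /eqP -> k _; exists k; rewrite expr0 mul1r; exact: ZP0.
move=> nN k hx.
have [n0|npos] := posnP n.
  subst n; exists k; rewrite expr0 mul1r; exact: ZP0.
have d'pos : 0 < d' by apply: le_lt_trans hx.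
have hT : dT (Tn n x) b < d'.
  rewrite Tn_dZ; apply: (lt_dZ (k := k)) => //. lra.
have : ~ (forall j, (j < n)%N ->
    ~ (exists y, compJ n b d x y /\ dT (Tn j y) b = 0)).
  by move=> g; apply: ng; exists n; split.
move/existsNP => [j] /not_implyP [jn] /contrapT [y [Jy hy]].
move: hy; rewrite Tn_dZ => /dZ0 [i hi].
have hyk : `|2 ^+ n * y - b - k%:~R| < d.
  by apply: (comp_bound d12 _ Jy); apply: lt_trans hx d'd.
set m := (n - j)%N.
have nmj : n = (m + j)%N by rewrite /m subnK // ltnW.
have mpos : (0 < m)%N by rewrite /m subn_gt0.
have e2 : 0 < (2:R) ^+ m by rewrite exprn_gt0.
set e := b + k%:~R - 2 ^+ m * (b + i%:~R).
have yj : 2 ^+ j * y = b + i%:~R by rewrite -hi; ring.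
have hyn : 2 ^+ n * y = 2 ^+ m * (b + i%:~R) by rewrite nmj exprD -mulrA yj.
have Ee : Eset b d m e.
  split.
    by rewrite /e -normrN; move: hyk; rewrite hyn; congr (`|_| < _); ring.
  exists (k - i * 2 ^+ m); rewrite /e intrB intrM rmorphXn /=; ring.
set v := 2 ^+ n * x - b - k%:~R.
have vj : (v + e) / 2 ^+ m = 2 ^+ j * x - b - i%:~R.
  rewrite /v /e nmj exprD; field; by rewrite gt_eqF.
have hj : `|2 ^+ j * x - b - i%:~R| < d' by rewrite -vj; exact: stepP.
have [i' Hi'] := IH j (leq_trans (leq_trans jn nN) (leqnn _)) i hj.
exists i'; rewrite nmj; apply: (ZPS mpos Ee); by rewrite vj.
Qed.

End Chain.

Section Cover.
Variable R : realType.
Implicit Types b d : R.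

Lemma Zpath_inv b d n v y : Zpath b d n v y -> (n = 0%N /\ y = v) \/
  exists m n' e, [/\ n = (m + n')%N, (0 < m)%N, Eset b d m e &
     Zpath b d n' ((v + e) / 2 ^+ m) y].
Proof.
case => [v0|m n' v0 y0 e mp Ee Hz]; [by left | right; exists m, n', e; by split].
Qed.

Lemma Zpath_bound b d d' (stepP : forall m e v, (0 < m)%N -> Eset b d m e ->
   `|v| < d' -> `|(v + e) / 2 ^+ m| < d') n v y :
  Zpath b d n v y -> `|v| < d' -> `|y| < d'.
Proof.
elim => [//|m n' v0 y0 e mp Ee Hz IH] hv.
by apply: IH; apply: stepP.
Qed.

Lemma Eset_uniq b d m e1 e2 : d < 1/2 -> Eset b d m e1 -> Eset b d m e2 -> e1 = e2.
Proof.
move=> d12 [h1 [z1 he1]] [h2 [z2 he2]].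
have : `|(z1 - z2)%:~R : R| < 1.
  rewrite intrB.
  have -> : z1%:~R - z2%:~R = e1 - e2 :> R by rewrite he1 he2; ring.
  apply: (le_lt_trans (ler_normB _ _)); lra.
move/int_small => /eqP; rewrite subr_eq0 => /eqP hz.
by rewrite he1 he2 hz.
Qed.

Lemma Zpath_caseA b d (h0 : forall m e, (0 < m)%N -> Eset b d m e -> e = 0) n v y :
  Zpath b d n v y -> y = v / 2 ^+ n.
Proof.
elim => [v0|m n' v0 y0 e mp Ee Hz IH]; first by rewrite expr0 divr1.
by rewrite IH (h0 _ _ mp Ee) addr0 exprD -mulrA -invfM.
Qed.

Lemma cov_combine (P : nat -> R -> Prop) (r : R) (B : nat -> R) K :
  (forall m, (m < K)%N -> exists cs : seq R, (size cs)%:R <= B m /\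
     forall y, P m y -> exists2 c, c \in cs & `|y - c| < r) ->
  exists cs : seq R, (size cs)%:R <= \sum_(m < K) B m /\
     forall m y, (m < K)%N -> P m y -> exists2 c, c \in cs & `|y - c| < r.
Proof.
elim: K => [|K IH] H.
  by exists [::]; rewrite big_ord0; split => // m y.
have [cs1 [s1 c1]] := IH (fun m mK => H m (ltnW mK)).
have [cs2 [s2 c2]] := H K (ltnSn K).
exists (cs1 ++ cs2); split.
  by rewrite size_cat natrD big_ord_recr /=; apply: lerD.
move=> m y; rewrite ltnS leq_eqVlt => /orP [/eqP ->|mK] Py.
  by have [c cin hc] := c2 _ Py; exists c => //; rewrite mem_cat cin orbT.
by have [c cin hc] := c1 _ _ mK Py; exists c => //; rewrite mem_cat cin.
Qed.

Definition gsum (lam : R) (M n : nat) :=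
  \sum_(m < n.+1) (if (M <= m)%N then lam ^+ (n - m) else 0).

Lemma gsum_exact lam M n : (0 < M)%N ->
  gsum lam M n * (lam - 1) = if (M <= n.+1)%N then lam ^+ (n.+1 - M) - 1 else 0.
Proof.
move=> M0; elim: n => [|n IH].
  rewrite /gsum big_ord1 /=.
  have -> : (M <= 0)%N = false by case: M M0.
  rewrite mul0r; case: ifP => h2 //.
  have -> : (1 - M = 0)%N by apply/eqP; rewrite subn_eq0.
  by rewrite expr0 subrr.
rewrite /gsum big_ord_recr /= subnn expr0.
rewrite (eq_bigr (fun m : 'I_n.+1 => lam * (if (M <= m)%N then lam ^+ (n - m) else 0))); last first.
  move=> [m hm] _ /=; case: ifP => _; last by rewrite mulr0.
  by rewrite subSn // exprS.
rewrite -mulr_sumr mulrDl -mulrA -/(gsum lam M n) IH.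
case: (leqP M n.+1) => h1.
  rewrite ifT; last by apply: leqW.
  by rewrite (subSn h1) exprS; ring.
case: (leqP M n.+2) => h2.
  have -> : M = n.+2 by apply/eqP; rewrite eqn_leq h2 h1.
  by rewrite subnn expr0; ring.
by ring.
Qed.

Lemma gsum_le lam M n : 1 < lam -> (0 < M)%N -> 1 <= lam ^+ M.-1 * (lam - 1) ->
  gsum lam M n <= lam ^+ n.
Proof.
move=> l1 M0 hM.
have l0 : 0 < lam - 1 by lra.
rewrite -(ler_pM2r l0) gsum_exact //.
case: ifP => h; last by rewrite mulr_ge0 // ?exprn_ge0 //; lra.
have hn : n = ((n.+1 - M) + M.-1)%N by lia.
rewrite [in X in _ <= X]hn exprD -mulrA.
have hp : 0 <= lam ^+ (n.+1 - M) by rewrite exprn_ge0 //; lra.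
have : lam ^+ (n.+1 - M) * 1 <= lam ^+ (n.+1 - M) * (lam ^+ M.-1 * (lam - 1)).
  by apply: ler_wpM2l.
lra.
Qed.

End Cover.

Section Cover2.
Variable R : realType.
Implicit Types b d : R.

Definition CovProp b d (lam : R) (n : nat) := forall c rho : R,
  exists cs : seq R, (size cs)%:R <= lam ^+ n /\
   forall v y, `|v - c| < rho -> Zpath b d n v y ->
     exists2 c', c' \in cs & `|y - c'| < rho / 2 ^+ n.

Lemma cov_caseA b d lam (l1 : 1 <= lam)
  (h0 : forall m e, (0 < m)%N -> Eset b d m e -> e = 0) n : CovProp b d lam n.
Proof.
move=> c rho; exists [:: c / 2 ^+ n]; split.
  by rewrite /= exprn_ege1.
move=> v y hv Hz; exists (c / 2 ^+ n); first by rewrite inE.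
have e2 : 0 < (2:R) ^+ n by rewrite exprn_gt0.
rewrite (Zpath_caseA h0 Hz) -mulrBl normrM normfV (ger0_norm (ltW e2)).
by rewrite ltr_pM2r ?invr_gt0.
Qed.

Lemma cov_caseB b d lam M (d12 : d < 1/2) (l1 : 1 < lam) (M0 : (0 < M)%N)
  (hM : 1 <= lam ^+ M.-1 * (lam - 1))
  (hBig : forall m e, (0 < m)%N -> Eset b d m e -> (M <= m)%N) n :
  CovProp b d lam n.
Proof.
elim: n {-2}n (leqnn n) => [|N IH] n nN c rho.
  move: nN; rewrite leqn0 => /eqP ->.
  exists [:: c]; split; first by rewrite /= expr0.
  move=> v y hv /Zpath_inv [[_ ->]|[m [n' [e [h0 mp _ _]]]]].
    by exists c; rewrite ?inE // expr0 divr1.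
  by move: mp; rewrite (_ : m = 0%N) //; lia.
have [n0|npos] := posnP n.
  subst n; exists [:: c]; split; first by rewrite /= expr0.
  move=> v y hv /Zpath_inv [[_ ->]|[m [n' [e [h0 mp _ _]]]]].
    by exists c; rewrite ?inE // expr0 divr1.
  by move: mp; rewrite (_ : m = 0%N) //; lia.
pose P m y := exists v, `|v - c| < rho /\ exists e n', [/\ n = (m + n')%N,
   (0 < m)%N, Eset b d m e & Zpath b d n' ((v + e) / 2 ^+ m) y].
pose B m := if (M <= m)%N then lam ^+ (n - m) else 0.
have [cs [hs hc]] : exists cs : seq R, (size cs)%:R <= \sum_(m < n.+1) B m /\
     forall m y, (m < n.+1)%N -> P m y ->
       exists2 c', c' \in cs & `|y - c'| < rho / 2 ^+ n.
  apply: cov_combine => m mn.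
  have [[e [Ee mp]]|none] := pselect (exists e, Eset b d m e /\ (0 < m)%N).
    have Mm := hBig _ _ mp Ee.
    have nmN : (n - m <= N)%N by lia.
    have [cs [hs hc]] := IH (n - m)%N nmN ((c + e) / 2 ^+ m) (rho / 2 ^+ m).
    exists cs; split; first by rewrite /B Mm.
    move=> y [v [hv [e' [n' [hn mp' Ee' Hz]]]]].
    have ee : e' = e by apply: Eset_uniq Ee' Ee.
    have nn : n' = (n - m)%N by lia.
    subst e' n'.
    have e2 : 0 < (2:R) ^+ m by rewrite exprn_gt0.
    have hv' : `|(v + e) / 2 ^+ m - (c + e) / 2 ^+ m| < rho / 2 ^+ m.
      rewrite -mulrBl normrM normfV (ger0_norm (ltW e2)) ltr_pM2r ?invr_gt0 //.
      by have -> : v + e - (c + e) = v - c by ring.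
    have [c' c'in hc'] := hc ((v + e) / 2 ^+ m) y hv' Hz.
    exists c' => //; move: hc'; rewrite -mulrA -invfM -exprD.
    by rewrite -hn.
  exists [::]; split; first by rewrite /B /=; case: ifP => _ //; rewrite exprn_ge0 //; lra.
  move=> y [v [hv [e' [n' [hn mp' Ee' Hz]]]]].
  by exfalso; apply: none; exists e'.
exists cs; split.
  apply: (le_trans hs); apply: gsum_le => //.
move=> v y hv /Zpath_inv [[h0 _]|[m [n' [e [hn mp Ee Hz]]]]].
  by rewrite h0 in npos.
apply: (hc m) => //; first by lia.
exists v; split => //; exists e, n'; by split.
Qed.

End Cover2.

Section NumAux.
Variable R : realType.

Lemma bernoulli_ineq (x : R) n : 1 <= x -> 1 + n%:R * (x - 1) <= x ^+ n.
Proof.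
move=> x1; elim: n => [|n IH]; first by rewrite expr0 mul0r addr0.
rewrite exprS -natr1.
have h0 : 0 <= n%:R * (x - 1) * (x - 1) by rewrite mulr_ge0 ?mulr_ge0 //; lra.
have : x * (1 + n%:R * (x - 1)) <= x * x ^+ n by apply: ler_wpM2l => //; lra.
nra.
Qed.

Lemma geo_small (q th : R) : 0 < q -> q < 1 -> 0 < th ->
  exists N0 : nat, forall N, (N0 <= N)%N -> q ^+ N <= th.
Proof.
move=> q0 q1 th0.
set y := q^-1.
have y1 : 1 < y by rewrite /y invf_gt1.
set K := (th * (y - 1))^-1.
have K0 : 0 <= K by rewrite /K invr_ge0 mulr_ge0 //; lra.
exists (Num.Def.archi_bound K) => N hN.
have hK : K <= N%:R.
  apply: ltW; apply: (lt_le_trans (archi_boundP K0)); by rewrite ler_nat.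
have hb := bernoulli_ineq N (ltW y1).
have e1 : K * (y - 1) = th^-1.
  rewrite /K; field; apply/andP; split; [by rewrite gt_eqF | by apply/negP => /eqP; lra].
have : K * (y - 1) <= N%:R * (y - 1) by apply: ler_wpM2r => //; lra.
rewrite e1 => hth.
have yN : th^-1 <= y ^+ N by lra.
have hq : q ^+ N = (y ^+ N)^-1 by rewrite /y exprVn invrK.
rewrite hq -[th]invrK lef_pV2 ?posrE ?invr_gt0 ?exprn_gt0 //; lra.
Qed.

Lemma powR2_gt1 (s : R) : 0 < s -> 1 < powR 2 s.
Proof.
move=> s0; rewrite /powR ifF; last by apply/negbTE; rewrite pnatr_eq0.
by rewrite expR_gt1 mulr_gt0 // ln_gt0 // ltr1n.
Qed.

Lemma powR2_le2 (s : R) : s <= 1 -> powR 2 s <= 2.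
Proof.
move=> s1; rewrite -{2}(powRr1 (a := 2)) ?ler0n //; apply: ler_powR => //.
by rewrite ler1n.
Qed.

Lemma powR_invX (x s : R) n : 0 < x -> powR ((x ^+ n)^-1) s = (powR x s ^+ n)^-1.
Proof.
move=> x0.
have xn : 0 < x ^+ n by rewrite exprn_gt0.
have -> : powR ((x ^+ n)^-1) s = (powR (x ^+ n) s)^-1.
  rewrite /powR ifF; last by apply/negbTE; rewrite invr_eq0 gt_eqF.
  rewrite ifF; last by apply/negbTE; rewrite gt_eqF.
  by rewrite lnV ?posrE // mulrN expRN.
rewrite -powR_mulrn ?ltW // -powRrM mulrC powRrM powR_mulrn //.
exact: powR_ge0.
Qed.

Lemma count_sum (a : R) L : 0 <= a -> forall T m,
  \sum_(m <= i < m + T) (if (i - m < L)%N then a else 0) <= L%:R * a.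
Proof.
move=> a0; elim => [|T IH] m.
  by rewrite addn0 big_geq // mulr_ge0.
rewrite addnS big_nat_recr /=; last by rewrite leq_addr.
rewrite addKn.
case: ifP => hT; last by rewrite addr0.
  have : \sum_(m <= i < m + T) (if (i - m < L)%N then a else 0) <= T%:R * a.
    elim: T {IH hT} => [|T IH2]; first by rewrite addn0 big_geq // mul0r.
    rewrite addnS big_nat_recr /=; last by rewrite leq_addr.
    rewrite -natr1 mulrDl mul1r; apply: lerD => //; case: ifP => // _.
  have : T.+1%:R * a <= L%:R * a by apply: ler_wpM2r => //; rewrite ler_nat.
  rewrite -natr1 mulrDl mul1r; lra.
Qed.

Lemma geo_tail (q : R) N K : 0 <= q -> q < 1 ->
  \sum_(k < K) (if (N <= k)%N then q ^+ k else 0) <= q ^+ N / (1 - q).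
Proof.
move=> q0 q1.
have h1q : 0 < 1 - q by lra.
suff : (\sum_(k < K) (if (N <= k)%N then q ^+ k else 0)) * (1 - q) +
   (if (N <= K)%N then q ^+ K else q ^+ N) <= q ^+ N.
  move=> h; rewrite ler_pdivlMr //.
  have : 0 <= (if (N <= K)%N then q ^+ K else q ^+ N) by case: ifP; rewrite exprn_ge0.
  lra.
elim: K => [|K IH].
  rewrite big_ord0 mul0r add0r; case: ifP => //; rewrite leqn0 => /eqP ->; lra.
rewrite big_ord_recr /= mulrDl.
case: (leqP N K) => hNK.
  rewrite (ifT _ _ hNK) in IH; rewrite (ifT _ _ (leqW hNK)).
  have : q ^+ K * (1 - q) + q ^+ K.+1 = q ^+ K by rewrite exprS; ring.
  lra.
have nNK : (N <= K)%N = false by apply/negbTE; rewrite -ltnNge.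
rewrite nNK in IH.
have -> : (if (N <= K.+1)%N then q ^+ K.+1 else q ^+ N) = q ^+ N.
  by case: ifP => // h; have -> : N = K.+1 by apply/eqP; rewrite eqn_leq h hNK.
lra.
Qed.

Lemma block_sum (g : nat -> R) K :
  \sum_(0 <= i < 2 ^ K) g i = g 0%N + \sum_(k < K) \sum_(2 ^ k <= i < 2 ^ k.+1) g i.
Proof.
elim: K => [|K IH]; first by rewrite expn0 big_nat1 big_ord0 addr0.
rewrite (big_cat_nat (n := 2 ^ K)) //=; last by rewrite leq_pexp2l.
by rewrite IH big_ord_recr /= addrA.
Qed.

End NumAux.

Section Haus.
Variable R : realType.

Definition hval (s : R) (U : set R) : R :=
  if pselect (U = set0) then 0 else powR (diamR U) s.

Lemma htermE s U : hterm s U = (hval s U)%:E.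
Proof. by []. Qed.

Lemma hval_ge0 s U : 0 <= hval s U.
Proof. by rewrite /hval; case: (pselect (U = set0)) => U0 //; exact: powR_ge0. Qed.

Lemma hval_le (s D : R) (U : set R) : 0 <= s -> 0 <= D ->
  (forall x y, U x -> U y -> `|x - y| <= D) -> hval s U <= powR D s.
Proof.
move=> s0 D0 hU; rewrite /hval; case: (pselect (U = set0)) => [U0|Un]; first exact: powR_ge0.
have [x0 Ux0] : exists x, U x.
  by apply: contrapT => h; apply: Un; apply/seteqP; split => x // Ux; apply: h; exists x.
set E := [set d | exists x y, U x /\ U y /\ d = `|x - y|].
have Ene : E !=set0 by exists 0; exists x0, x0; rewrite subrr normr0.
have Eub : ubound E D by move=> d [x [y [Ux [Uy ->]]]]; exact: hU.
have hsup : diamR U <= D by apply: ge_sup.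
have hsup0 : 0 <= diamR U.
  apply: (ub_le_sup (E := E)); first by exists D.
  by exists x0, x0; rewrite subrr normr0.
by apply: ge0_ler_powR.
Qed.

Lemma series_le (g : nat -> R) (B : R) : (forall i, 0 <= g i) ->
  (forall K, \sum_(0 <= i < K) g i <= B) ->
  (\sum_(0 <= i <oo) (g i)%:E <= B%:E)%E.
Proof.
move=> g0 hB.
have h0 : forall n, (0 <= n)%N -> xpredT n -> (0 <= (g n)%:E)%E.
  by move=> n _ _; rewrite lee_fin.
move: (ereal_nondecreasing_series h0) => /ereal_nondecreasing_cvgn/cvg_lim => ->//.
apply: ge_ereal_sup => _ [K _ <-] /=.
by rewrite sumEFin lee_fin.
Qed.

Lemma hmeasure0 (s : R) (A : set R) : 0 <= s ->
  (forall eta tau : R, 0 < eta -> 0 < tau -> exists U : nat -> set R,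
     eta_cover eta A U /\ forall K, \sum_(0 <= i < K) hval s (U i) <= tau) ->
  hmeasure s A = 0%E.
Proof.
move=> s0 H.
have hc : forall eta, 0 < eta -> hcontent s eta A = 0%E.
  move=> eta eta0; apply/eqP; rewrite eq_le; apply/andP; split.
    apply/lee_addgt0Pr => tau tau0; rewrite add0e.
    have [U [hU hK]] := H eta tau eta0 tau0.
    apply: ge_ereal_inf; exists (\sum_(0 <= i <oo) hterm s (U i))%E.
      by exists U.
    exact: (series_le (fun i => hval_ge0 s (U i)) hK).
  apply: le_ereal_inf_tmp => _ [U hU <-].
  apply: nneseries_ge0 => n _ _; rewrite htermE lee_fin; exact: hval_ge0.
rewrite /hmeasure; apply/eqP; rewrite eq_le; apply/andP; split.
  by apply: ge_ereal_sup => _ [eta /= eta0 <-]; rewrite (hc _ eta0).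
apply: le_ereal_sup_tmp; exists (hcontent s 1 A); first by exists 1; rewrite /= ?ltr01.
by rewrite (hc 1 ltr01).
Qed.

Lemma hdim_lt (A : set R) (eps s : R) : 0 <= s -> s < eps ->
  hmeasure s A = 0%E -> (hdim A < eps%:E)%E.
Proof.
move=> s0 seps h; apply: (le_lt_trans (y := s%:E)); last by rewrite lte_fin.
by apply: ereal_inf_lbound; exists s.
Qed.

End Haus.

Section Params.
Variable R : realType.

Lemma fmin (h : nat -> R) K : (forall i, (i < K)%N -> 0 < h i) ->
  exists d1, 0 < d1 /\ forall i, (i < K)%N -> d1 <= h i.
Proof.
elim: K => [|K IH] hpos.
  by exists 1; split => // i.
have [d1 [d10 hd1]] := IH (fun i iK => hpos i (ltnW iK)).
exists (Num.min d1 (h K)); split.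
  by rewrite lt_min d10 hpos.
move=> i; rewrite ltnS leq_eqVlt => /orP [/eqP ->|iK].
  by rewrite ge_min lexx orbT.
by rewrite ge_min hd1.
Qed.

Definition stepProp (b d d' : R) := forall m e v, (0 < m)%N -> Eset b d m e ->
  `|v| < d' -> `|(v + e) / 2 ^+ m| < d'.

Lemma periodic (b : R) p (z0 : int) : (0 < p)%N -> 2 ^+ p * b - b = z0%:~R ->
  forall m, exists i, (i < p)%N /\ exists w : int, 2 ^+ m * b = 2 ^+ i * b + w%:~R.
Proof.
move=> p0 hz m; elim: m {-2}m (leqnn m) => [|N IH] m hm.
  by exists 0%N; split => //; exists 0; move: hm; rewrite leqn0 => /eqP ->; rewrite addr0.
have [mp|pm] := ltnP m p.
  by exists m; split => //; exists 0; rewrite addr0.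
have hm' : (m - p <= N)%N by lia.
have [i [ip [w hw]]] := IH (m - p)%N hm'.
exists i; split => //; exists (w + z0 * 2 ^+ (m - p)).
have hmp : m = ((m - p) + p)%N by rewrite subnK.
rewrite {1}hmp exprD -mulrA.
have -> : 2 ^+ p * b = b + z0%:~R by rewrite -hz addrC subrK.
rewrite mulrDr hw intrD intrM rmorphXn /=; ring.
Qed.

Lemma caseA_ok (b C lam : R) p (z0 : int) : 1 < C -> 1 <= lam -> (0 < p)%N ->
  2 ^+ p * b - b = z0%:~R ->
  exists d, [/\ 0 < d, d <= 1/8, stepProp b d (d / (2 * C)) &
    forall n, CovProp b d lam n].
Proof.
move=> C1 l1 p0 hz.
pose h i := if dZ (2 ^+ i * b - b) == 0 then 1 else dZ (2 ^+ i * b - b).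
have hpos : forall i, (i < p)%N -> 0 < h i.
  move=> i _; rewrite /h; case: ifP => // /negbT hne.
  by rewrite lt_def hne dZ_ge0.
have [d1 [d10 hd1]] := fmin hpos.
set d := Num.min d1 (1/4) / 2.
have d0 : 0 < d by rewrite /d divr_gt0 // lt_min d10 /=; lra.
have dd1 : d < d1.
  have : Num.min d1 (1/4) <= d1 by rewrite ge_min lexx.
  rewrite /d; lra.
have d8 : d <= 1/8.
  have : Num.min d1 (1/4) <= 1/4 by rewrite ge_min lexx orbT.
  rewrite /d; lra.
have h0 : forall m e, Eset b d m e -> e = 0.
  move=> m e [he [z hze]].
  have [i [ip [w hw]]] := periodic p0 hz m.
  have hdz : dZ (2 ^+ i * b - b) < d.
    apply: (lt_dZ (k := z - w)); first lra.
    have -> : 2 ^+ i * b - b - (z - w)%:~R = - e by rewrite hze hw intrB; ring.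
    by rewrite normrN.
  have hd0 : dZ (2 ^+ i * b - b) = 0.
    apply/eqP; apply: contraLR hdz => hne; rewrite -leNgt.
    have := hd1 i ip; rewrite /h (negbTE hne) => hh; lra.
  have [u hu] := dZ0 hd0.
  have : `|(z - w - u)%:~R : R| < 1.
    have -> : (z - w - u)%:~R = e :> R by rewrite hze !intrB -hu hw; ring.
    lra.
  move/int_small => hzz.
  have -> : e = (z - w - u)%:~R by rewrite hze !intrB -hu hw; ring.
  by rewrite hzz.
exists d; split => //.
- move=> m e v mp Ee hv; rewrite (h0 _ _ Ee) addr0.
  have e2 : 1 <= (2:R) ^+ m by rewrite exprn_ege1 // ler1n.
  rewrite normrM normfV (ger0_norm (le_trans ler01 e2)).
  apply: (le_lt_trans _ hv); rewrite ler_pdivrMr ?(lt_le_trans ltr01 e2) //.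
  by rewrite ler_peMr.
- by move=> n; apply: cov_caseA => // m e _; exact: h0.
Qed.

Lemma caseB_ok (b C lam : R) M : 1 < C -> 1 < lam -> (0 < M)%N ->
  1 <= lam ^+ M.-1 * (lam - 1) -> 2 * C + 1 <= 2 ^+ M ->
  (forall p (z : int), (0 < p)%N -> 2 ^+ p * b - b <> z%:~R) ->
  exists d, [/\ 0 < d, d <= 1/8, stepProp b d (d / (2 * C)) &
    forall n, CovProp b d lam n].
Proof.
move=> C1 l1 M0 hM hM2 np.
pose h i := if i == 0%N then 1 else dZ (2 ^+ i * b - b).
have hpos : forall i, (i < M)%N -> 0 < h i.
  move=> i _; rewrite /h; case: ifP => // /negbT i0.
  rewrite lt_def dZ_ge0 andbT; apply/eqP => /dZ0 [z hz].
  by apply: (np i z) => //; rewrite lt0n.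
have [d1 [d10 hd1]] := fmin hpos.
set d := Num.min d1 (1/4) / 2.
have d0 : 0 < d by rewrite /d divr_gt0 // lt_min d10 /=; lra.
have dd1 : d < d1.
  have : Num.min d1 (1/4) <= d1 by rewrite ge_min lexx.
  rewrite /d; lra.
have d8 : d <= 1/8.
  have : Num.min d1 (1/4) <= 1/4 by rewrite ge_min lexx orbT.
  rewrite /d; lra.
have hBig : forall m e, (0 < m)%N -> Eset b d m e -> (M <= m)%N.
  move=> m e mp [he [z hze]]; rewrite leqNgt; apply/negP => mM.
  have hdz : dZ (2 ^+ m * b - b) < d.
    apply: (lt_dZ (k := z)); first lra.
    have -> : 2 ^+ m * b - b - z%:~R = - e by rewrite hze; ring.
    by rewrite normrN.
  have := hd1 m mM; rewrite /h ifF; last by apply/negbTE; rewrite -lt0n.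
  lra.
exists d; split => //.
- move=> m e v mp Ee hv.
  have Mm := hBig _ _ mp Ee.
  have [he _] := Ee.
  have e2 : 0 < (2:R) ^+ m by rewrite exprn_gt0.
  have e2M : (2:R) ^+ M <= 2 ^+ m by rewrite ler_eXn2l // ltr1n.
  rewrite normrM normfV (ger0_norm (ltW e2)).
  rewrite ltr_pdivrMr //.
  have hve : `|v + e| < d / (2 * C) + d by apply: (le_lt_trans (ler_normD _ _)); lra.
  apply: (lt_le_trans hve).
  have C0 : 0 < 2 * C by lra.
  have -> : d / (2 * C) + d = (d / (2 * C)) * (2 * C + 1).
    by field; apply/negP => /eqP; lra.
  apply: ler_wpM2l; first by rewrite divr_ge0 //; lra.
  exact: (le_trans hM2 e2M).
- by move=> n; apply: (cov_caseB (M := M)) => //; lra.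
Qed.

End Params.

Section Final.
Variable R : realType.

Definition ball0 (a r : R) : set R := [set x | `|x - a| < r].

Lemma ball0_diam a r x y : ball0 a r x -> ball0 a r y -> `|x - y| <= 2 * r.
Proof.
rewrite /ball0 /= => hx hy.
have -> : x - y = (x - a) - (y - a) by ring.
apply: (le_trans (ler_normB _ _)); lra.
Qed.

Lemma int01 (i : int) (x b d' : R) : 0 <= x -> x < 1 -> - (1/2) < b -> b <= 1/2 -> d' < 1/4 ->
  `|x - b - i%:~R| < d' -> i = 0 \/ i = 1.
Proof.
move=> x0 x1 bl bu d'4 hxi.
have h1 : (-1 : R) < i%:~R by move: hxi; rewrite ltr_norml; lra.
have h2 : i%:~R < (2 : R) by move: hxi; rewrite ltr_norml; lra.
have h1' : (-1 < i)%R by rewrite -(ltr_int R) rmorphN1.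
have h2' : (i < 2)%R by rewrite -(ltr_int R).
lia.
Qed.

Lemma ar1 (N0 N1 k : nat) : ((N0 + N1).+1 <= k)%N -> (N1 <= k.-1)%N.
Proof. lia. Qed.

Lemma final (b d d' lam s : R) :
  - (1/2) < b -> b <= 1/2 -> 0 < d' -> d' < d -> d < 1/2 -> d' < 1/4 -> 0 < s ->
  (forall m e v, (0 < m)%N -> Eset b d m e -> `|v| < d' ->
     `|(v + e) / 2 ^+ m| < d') ->
  (forall n, CovProp b d lam n) -> 1 <= lam -> lam <= 2 -> lam < powR 2 s ->
  hmeasure s (badset b d d') = 0%E.
Proof.
move=> bl bu d'0 d'd d12 d'4 s0 stepP Cov l1 l2 lA.
apply: hmeasure0; first exact: ltW.
move=> eta tau eta0 tau0.
set A := powR 2 s.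
have A1 : 1 < A by apply: powR2_gt1.
set q := lam / A.
have q0 : 0 < q by rewrite /q divr_gt0 //; lra.
have q1 : q < 1 by rewrite /q ltr_pdivrMr ?mul1r //; lra.
set P := powR (2 * d') s.
have P0 : 0 < P by rewrite /P powR_gt0 //; lra.
have csP : forall n, {cs : seq R | (size cs)%:R <= lam ^+ n /\
   forall v y, `|v - 0| < d' -> Zpath b d n v y ->
     exists2 c', c' \in cs & `|y - c'| < d' / 2 ^+ n}.
  by move=> n; apply: cid; exact: Cov.
pose csf n := sval (csP n).
pose centers n := [seq b + c | c <- csf n] ++ [seq b + 1 + c | c <- csf n].
have q1' : 0 < 1 - q by lra.
have th0 : 0 < tau * q * (1 - q) / (2 * P).
  apply: divr_gt0; last by apply: mulr_gt0 => //; lra.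
  by apply: mulr_gt0 => //; apply: mulr_gt0.
have [N0 hN0] := geo_small q0 q1 th0.
set N1 := Num.Def.archi_bound (2 * d' / eta).
set N := (N0 + N1)%N.
pose U i := if [&& (0 < i)%N, (N.+1 <= trunc_log 2 i)%N &
       (i - 2 ^ trunc_log 2 i < size (centers (trunc_log 2 i).-1))%N]
  then ball0 (nth 0 (centers (trunc_log 2 i).-1) (i - 2 ^ trunc_log 2 i))
         (d' / 2 ^+ (trunc_log 2 i).-1)
  else set0.
have csz : forall n, (size (csf n) <= 2 ^ n)%N.
  move=> n; rewrite -(ler_nat R) natrX.
  apply: (le_trans (proj1 (svalP (csP n)))).
  by apply: lerXn2r; rewrite ?nnegrE //; lra.
have szc : forall n, size (centers n) = (2 * size (csf n))%N.
  by move=> n; rewrite size_cat !size_map mul2n addnn.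
exists U; split; first split.
- move=> x [/andP[x0 x1] [om ng]].
  have [n [Nn hn]] := om d' d'0 N.
  move: hn; rewrite Tn_dZ => /dZ_lt [k hk].
  have [i Hz] := chain d12 d'd stepP ng hk.
  have hxi := Zpath_bound stepP Hz hk.
  have hv0 : `|2 ^+ n * x - b - k%:~R - 0| < d' by rewrite subr0.
  have [c' c'in hc'] := (proj2 (svalP (csP n))) _ _ hv0 Hz.
  have hi01 := int01 x0 x1 bl bu d'4 hxi.
  set L := size (csf n).
  set t0 := index c' (csf n).
  have ht0 : (t0 < L)%N by rewrite /t0 /L index_mem.
  set t := if i == 0 then t0 else (L + t0)%N.
  have htL : (t < 2 * L)%N.
    rewrite /t mul2n -addnn; case: ifP => _; last by rewrite ltn_add2l.
    exact: (leq_trans ht0 (leq_addr _ _)).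
  have hnth : nth 0 (centers n) t = b + i%:~R + c'.
    rewrite /centers nth_cat size_map /t.
    case: hi01 => -> /=.
      by rewrite ht0 (nth_map 0) // nth_index // addr0.
    rewrite ifF; last by apply/negbTE; rewrite -leqNgt leq_addr.
    by rewrite addKn (nth_map 0) // nth_index.
  set idx := (2 ^ n.+1 + t)%N.
  have htl : trunc_log 2 idx = n.+1.
    apply: trunc_log_eq => //; rewrite /idx leq_addr andTb (expnS 2 n.+1).
    rewrite mul2n -addnn ltn_add2l; apply: (leq_trans htL).
    by rewrite expnS leq_mul2l /= csz.
  exists idx => //.
  rewrite /U htl /= ifT; last first.
    apply/and3P; split; [by rewrite /idx addn_gt0 expn_gt0 | by [] |].
    by rewrite /idx addKn szc.
  rewrite /idx addKn hnth /ball0 /=.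
  by move: hc'; congr (`|_| < _); ring.
- move=> i x y; rewrite /U; case: ifP => [/and3P [ip hk ht]|_] hx hy; last by [].
  apply: (le_trans (ball0_diam hx hy)).
  set k := trunc_log 2 i in hk hx hy *.
  have e2 : 0 < (2:R) ^+ k.-1 by rewrite exprn_gt0.
  have hN1 : 2 * d' / eta < N1%:R by apply: archi_boundP; rewrite divr_ge0 //; lra.
  rewrite ltr_pdivrMr // in hN1.
  have hk1 : (N1 < 2 ^ k.-1)%N by apply: (leq_ltn_trans (ar1 hk)); apply: ltn_expl.
  have : N1%:R <= (2:R) ^+ k.-1 by rewrite -natrX ler_nat ltnW.
  move=> h; rewrite mulrA ler_pdivrMr //.
  have : N1%:R * eta <= 2 ^+ k.-1 * eta by apply: ler_wpM2r => //; lra.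
  lra.
- have hv0 : hval s set0 = 0.
    by rewrite /hval; case: (pselect (set0 = set0)).
  have a_eq : forall n, powR (2 * (d' / 2 ^+ n)) s = P * (A ^+ n)^-1.
    move=> n; rewrite mulrA powRM; last 2 first.
    - by rewrite mulr_ge0 //; lra.
    - by rewrite invr_ge0 exprn_ge0.
    by rewrite powR_invX.
  have a_ge0 : forall n, 0 <= powR (2 * (d' / 2 ^+ n)) s by move=> n; exact: powR_ge0.
  pose c := 2 * P / q.
  have c0 : 0 < c by rewrite /c divr_gt0 // mulr_gt0.
  have blk : forall k, \sum_(2 ^ k <= i < 2 ^ k.+1) hval s (U i) <=
      (if (N <= k)%N then c * q ^+ k else 0).
    move=> k.
    have tl : forall i, (2 ^ k <= i < 2 ^ k.+1)%N -> trunc_log 2 i = k.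
      by move=> i hi; apply: trunc_log_eq.
    set L := size (centers k.-1).
    set a := powR (2 * (d' / 2 ^+ k.-1)) s.
    have step1 : \sum_(2 ^ k <= i < 2 ^ k.+1) hval s (U i) <=
        \sum_(2 ^ k <= i < 2 ^ k.+1)
           (if (N.+1 <= k)%N then (if (i - 2 ^ k < L)%N then a else 0) else 0).
      apply: ler_sum_nat => i hi; rewrite /U (tl i hi).
      case: ifP => [/and3P[ip hk ht]|hc].
        rewrite hk ht; apply: hval_le; [exact: ltW | | by move=> x y; apply: ball0_diam].
        by rewrite mulr_ge0 // divr_ge0 ?exprn_ge0 //; lra.
      by rewrite hv0; case: ifP => _ //; case: ifP => _ //; exact: a_ge0.
    apply: (le_trans step1).
    case: (boolP (N.+1 <= k)%N) => hk.
      have kpos : (0 < k)%N by apply: leq_trans hk.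
      rewrite ifT; last exact: ltnW.
      have := count_sum L (a_ge0 k.-1) (2 ^ k) (2 ^ k).
      rewrite (expnS 2 k) mul2n -addnn; move=> hc; apply: (le_trans hc).
      have hL : (L%:R : R) <= 2 * lam ^+ k.-1.
        rewrite /L szc natrM; apply: ler_wpM2l => //.
        exact: (proj1 (svalP (csP k.-1))).
      have hqk : q ^+ k = q ^+ k.-1 * q by rewrite -exprSr prednK.
      rewrite /a a_eq hqk /c /q.
      have hA : 0 < A ^+ k.-1 by rewrite exprn_gt0 //; lra.
      have : L%:R * (P * (A ^+ k.-1)^-1) <= 2 * lam ^+ k.-1 * (P * (A ^+ k.-1)^-1).
        by apply: ler_wpM2r => //; rewrite mulr_ge0 ?invr_ge0 //; [lra | lra].
      move=> h; apply: (le_trans h); rewrite le_eqVlt; apply/orP; left; apply/eqP.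
      rewrite exprMn exprVn; field.
      by apply/and3P; split; rewrite gt_eqF //; lra.
    rewrite big1 //.
    by case: ifP => _ //; rewrite mulr_ge0 // ?exprn_ge0 //; lra.
  move=> K.
  have hK : (K <= 2 ^ K)%N by apply: ltnW; apply: ltn_expl.
  have : \sum_(0 <= i < K) hval s (U i) <= \sum_(0 <= i < 2 ^ K) hval s (U i).
    rewrite (big_cat_nat (leq0n K) hK) /= lerDl.
    by apply: sumr_ge0 => i _; exact: hval_ge0.
  move=> h; apply: (le_trans h); rewrite block_sum.
  have -> : U 0%N = set0 by rewrite /U.
  rewrite hv0 add0r.
  apply: le_trans; first by apply: ler_sum => k _; exact: blk.
  have -> : \sum_(k < K) (if (N <= k)%N then c * q ^+ k else 0) =
     c * \sum_(k < K) (if (N <= k)%N then q ^+ k else 0).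
    rewrite mulr_sumr; apply: eq_bigr => k _; case: ifP => _ //; by rewrite mulr0.
  have := geo_tail N K (ltW q0) q1.
  have hNN : q ^+ N <= tau * q * (1 - q) / (2 * P) by apply: hN0; rewrite /N leq_addr.
  move=> hg; apply: (le_trans (ler_wpM2l (ltW c0) hg)).
  have : c * (q ^+ N / (1 - q)) <= c * (tau * q * (1 - q) / (2 * P) / (1 - q)).
    apply: ler_wpM2l; first exact: ltW.
    by rewrite ler_pM2r ?invr_gt0.
  move=> h2; apply: (le_trans h2); rewrite le_eqVlt; apply/orP; left; apply/eqP.
  rewrite /c; field.
  by apply/and3P; split; rewrite gt_eqF //; lra.
Qed.

End Final.

Lemma hM_lemma (R : realType) (lam X : R) (M0 : nat) : 1 < lam ->
  ((lam - 1) ^+ 2)^-1 <= X -> X < M0%:R -> 1 <= lam ^+ M0 * (lam - 1).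
Proof.
move=> l1 hX hM0.
have hb := bernoulli_ineq M0 (ltW l1).
have l10 : 0 < lam - 1 by lra.
have hx : ((lam - 1) ^+ 2)^-1 <= M0%:R by lra.
have h1 : 1 <= M0%:R * (lam - 1) ^+ 2.
  by rewrite -ler_pdivrMr ?exprn_gt0 // mul1r.
have h2 : (1 + M0%:R * (lam - 1)) * (lam - 1) <= lam ^+ M0 * (lam - 1).
  by apply: ler_wpM2r => //; lra.
have e : (1 + M0%:R * (lam - 1)) * (lam - 1) = (lam - 1) + M0%:R * (lam - 1) ^+ 2.
  by rewrite expr2; ring.
lra.
Qed.

Lemma hM2_lemma (R : realType) (C lam X : R) (M0 : nat) : 1 < lam ->
  X = ((lam - 1) ^+ 2)^-1 + 2 * C + 1 -> X < M0%:R -> 2 * C + 1 <= 2 ^+ M0.+1.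
Proof.
move=> l1 hX hM0.
have : (M0.+1 < 2 ^ M0.+1)%N by apply: ltn_expl.
rewrite -(ltr_nat R) natrX => h.
have : M0%:R <= (M0.+1%:R : R) by rewrite ler_nat.
have : 0 <= ((lam - 1) ^+ 2)^-1 by rewrite invr_ge0 exprn_ge0 //; lra.
rewrite hX in hM0; lra.
Qed.

Theorem proposition6p5 (R : realType) (c : R) :
  0 <= c -> c < 1 ->
  forall eps : R, 0 < eps ->
  forall C : R, 1 < C ->
  exists delta delta' : R,
    0 < delta' /\ delta' < C * delta' /\ C * delta' < delta /\ delta < 1 / 2 /\
    (hdim (badset (1 / 2 - c) delta delta') < eps%:E)%E.
Proof.
move=> c0 c1 eps eps0 C C1.
set b := 1 / 2 - c.
have bl : - (1/2) < b by rewrite /b; lra.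
have bu : b <= 1/2 by rewrite /b; lra.
set s := Num.min eps 1 / 2.
have s0 : 0 < s by rewrite /s divr_gt0 // lt_min eps0 ltr01.
have s1 : s <= 1.
  have : Num.min eps 1 <= 1 by rewrite ge_min lexx orbT.
  rewrite /s; lra.
have seps : s < eps.
  have : Num.min eps 1 <= eps by rewrite ge_min lexx.
  rewrite /s; lra.
set A := powR 2 s.
have A1 : 1 < A := powR2_gt1 s0.
have A2 : A <= 2 := powR2_le2 s1.
set lam := (1 + A) / 2.
have l1 : 1 < lam by rewrite /lam; lra.
have lA : lam < A by rewrite /lam; lra.
have l2 : lam <= 2 by rewrite /lam; lra.
set X := ((lam - 1) ^+ 2)^-1 + 2 * C + 1.
have X0 : 0 <= X.
  by rewrite /X addr_ge0 // addr_ge0 // ?invr_ge0 ?exprn_ge0 //; lra.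
set M0 := Num.Def.archi_bound X.
have hM0 : X < M0%:R := archi_boundP X0.
set M := M0.+1.
have M0pos : (0 < M)%N by [].
have hM : 1 <= lam ^+ M.-1 * (lam - 1).
  rewrite /M /=; apply: (hM_lemma l1 _ hM0).
  by rewrite /X; lra.
have hM2 : 2 * C + 1 <= 2 ^+ M by apply: (hM2_lemma l1 erefl hM0).
have [d [d0 d8 stepP Cov]] : exists d, [/\ 0 < d, d <= 1/8,
    stepProp b d (d / (2 * C)) & forall n, CovProp b d lam n].
  have [[p [p0 [z hz]]]|np] :=
    pselect (exists p, (0 < p)%N /\ exists z : int, 2 ^+ p * b - b = z%:~R).
    exact: (caseA_ok C1 (ltW l1) p0 hz).
  apply: (caseB_ok C1 l1 M0pos hM hM2) => p z p0 hz.
  by apply: np; exists p; split => //; exists z.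
clear hM hM2 hM0 X0 M0pos.
have C0 : 0 < 2 * C by lra.
exists d, (d / (2 * C)).
have d'0 : 0 < d / (2 * C) by rewrite divr_gt0.
have hCd : C * (d / (2 * C)) = d / 2 by field; apply/negP => /eqP; lra.
split => //; split.
  by rewrite -[X in X < _]mul1r ltr_pM2r.
split; first by rewrite hCd; lra.
split; first lra.
apply: (hdim_lt (ltW s0) seps).
have d'd : d / (2 * C) < d.
  by rewrite ltr_pdivrMr // ltr_pMr //; lra.
apply: (final bl bu d'0 d'd) => //; try lra.
Qed.
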